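(* Let $(X_j)_{j\in\mathbb{Z}^2}$ be i.i.d. Poisson random variables with mean $\lambda>0$, and let $N_n$ be the greedy lattice animal weight of size $n$. There is a constant $\rho>0$ (not depending on $\lambda$) such that for all $y\ge y_0:=(e^3\lambda)\vee\rho$ and all $n\in\mathbb{N}$, $$\mathbb{P}(N_n>yn)\le e^{-yn}.$$
   Context: A lattice animal is a connected subset of $\mathbb{Z}^2$ (nearest-neighbor connectivity) containing the origin; $A(n)$ is the set of lattice animals with $n$ sites. Given $X:\mathbb{Z}^2\to\mathbb{R}$, the weight of $\mathcal{A}\in A(n)$ is $\sum_{k\in\mathcal{A}}X_k$, and $N_n=\max_{\mathcal{A}\in A(n)}\sum_{k\in\mathcal{A}}X_k$. *)

(* Defs.v *)
From Stdlib Require Import Reals ZArith List.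
Import ListNotations.
Open Scope R_scope.

Definition site := (Z * Z)%type.
Definition origin : site := (0%Z, 0%Z).
Definition adj (a b : site) : Prop :=
  (Z.abs (fst a - fst b) + Z.abs (snd a - snd b) = 1)%Z.

Inductive reach (A : list site) : site -> Prop :=
| reach_origin : In origin A -> reach A origin
| reach_step : forall a b, reach A a -> In b A -> adj a b -> reach A b.

Definition lattice_animal (n : nat) (A : list site) : Prop :=
  NoDup A /\ length A = n /\ In origin A /\ (forall a, In a A -> reach A a).

Definition weight (X : site -> R) (A : list site) : R :=
  fold_right (fun k s => X k + s) 0 A.

(** "N_n > t", where N_n = max_{A in A(n)} weight X A. *)
Definition Nn_gt (X : site -> R) (n : nat) (t : R) : Prop :=
  exists A, lattice_animal n A /\ weight X A > t.

Definition poisson_pmf (lam : R) (k : nat) : R :=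
  exp (- lam) * lam ^ k / INR (fact k).

(** The box [-n,n]^2, which contains every lattice animal of size n. *)
Definition zrange (n : nat) : list Z :=
  map (fun k => (Z.of_nat k - Z.of_nat n)%Z) (seq 0 (2 * n + 1)).
Definition box (n : nat) : list site :=
  flat_map (fun i => map (fun j => (i, j)) (zrange n)) (zrange n).

Definition site_eq_dec : forall a b : site, {a = b} + {a <> b}.
Proof. decide equality; apply Z.eq_dec. Defined.

(** A configuration on the box: a list of values aligned with [box n];
    it is extended by 0 outside the box (irrelevant for the event). *)
Fixpoint lookup (s : list site) (v : list nat) (k : site) : nat :=
  match s, v with
  | a :: s', x :: v' => if site_eq_dec a k then x else lookup s' v' k
  | _, _ => 0%nat
  end.
Definition cfg (n : nat) (v : list nat) : site -> R :=
  fun k => INR (lookup (box n) v k).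

(** Probability (product of i.i.d. Poisson(lam) marginals) of a configuration. *)
Definition cfg_prob (lam : R) (v : list nat) : R :=
  fold_right (fun x p => poisson_pmf lam x * p) 1 v.
Definition sum_prob (lam : R) (L : list (list nat)) : R :=
  fold_right (fun v s => cfg_prob lam v + s) 0 L.

(* Main.v *)
Require Import Defs.
From Stdlib Require Import Reals ZArith List Lia Lra.
Import ListNotations.
Open Scope R_scope.

Close Scope R_scope.

Inductive dir := dE | dW | dN | dS.
Definition step (p : site) (d : dir) : site :=
  let (x, y) := p in
  match d with
  | dE => ((x + 1)%Z, y) | dW => ((x - 1)%Z, y)
  | dN => (x, (y + 1)%Z) | dS => (x, (y - 1)%Z)
  end.
Definition opp d := match d with dE => dW | dW => dE | dN => dS | dS => dN end.

Lemma step_opp p d : step (step p d) (opp d) = p.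
Proof. destruct p as [x y]; destruct d; simpl; f_equal; lia. Qed.

Fixpoint visited (p : site) (w : list dir) : list site :=
  match w with [] => [p] | d :: w' => p :: visited (step p d) w' end.
Fixpoint endp (p : site) (w : list dir) : site :=
  match w with [] => p | d :: w' => endp (step p d) w' end.

Lemma visited_head p w : In p (visited p w).
Proof. destruct w; simpl; auto. Qed.

Lemma visited_app x p w1 w2 :
  In x (visited p (w1 ++ w2)) <-> In x (visited p w1) \/ In x (visited (endp p w1) w2).
Proof.
  revert p; induction w1 as [|d w1 IH]; intros p; simpl.
  - split; [tauto|]. intros [[<-|[]]|H]; auto. apply visited_head.
  - rewrite IH. tauto.
Qed.

Lemma visited_split s p w : In s (visited p w) -> exists w1 w2, w = w1 ++ w2 /\ endp p w1 = s.
Proof.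
  revert p; induction w as [|d w IH]; intros p H; simpl in H.
  - destruct H as [<-|[]]. exists [], []; auto.
  - destruct H as [<-|H].
    + exists [], (d :: w); auto.
    + destruct (IH _ H) as [w1 [w2 [-> E]]]. exists (d :: w1), w2; auto.
Qed.

Lemma adj_step a b : adj a b -> exists d, b = step a d.
Proof.
  destruct a as [x y], b as [x' y']; unfold adj; simpl; intros H.
  assert ((x' = x + 1 /\ y' = y) \/ (x' = x - 1 /\ y' = y) \/ (x' = x /\ y' = y + 1) \/ (x' = x /\ y' = y - 1))%Z as C by lia.
  destruct C as [[-> ->]|[[-> ->]|[[-> ->]|[-> ->]]]].
  - exists dE; auto.
  - exists dW; auto.
  - exists dN; auto.
  - exists dS; auto.
Qed.

Lemma extend p w s d : In s (visited p w) -> exists w',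
  length w' = (length w + 2)%nat /\ (forall x, In x (visited p w) -> In x (visited p w')) /\
  In (step s d) (visited p w').
Proof.
  intros H. destruct (visited_split s p w H) as [w1 [w2 [-> E]]].
  exists (w1 ++ d :: opp d :: w2). split; [rewrite !length_app; simpl; lia|]. split.
  - intros x Hx. apply visited_app in Hx. apply visited_app. rewrite E in *.
    destruct Hx as [Hx|Hx]; [left; auto|right]. simpl. rewrite step_opp. auto.
  - apply visited_app. right. rewrite E. simpl. auto.
Qed.

Lemma conn A V : In origin V -> forall b, reach A b ->
  In b V \/ exists s a, In s V /\ In a A /\ ~ In a V /\ adj s a.
Proof.
  intros HO b Hr. induction Hr as [H|a b Hr IH Hb Hab]; auto.
  destruct (in_dec site_eq_dec b V) as [h|h]; auto.
  right. destruct IH as [IH|IH]; auto. exists a, b; auto.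
Qed.

Lemma filter_le {A} (f g : A -> bool) l : (forall x, In x l -> f x = true -> g x = true) ->
  length (filter f l) <= length (filter g l).
Proof. induction l as [|a l IH]; simpl; intros H; auto.
  specialize (IH (fun x Hx => H x (or_intror Hx))).
  destruct (f a) eqn:Ef; [rewrite (H a (or_introl eq_refl) Ef); simpl; lia|].
  destruct (g a); simpl; lia. Qed.

Lemma filter_lt {A} (f g : A -> bool) l a : (forall x, In x l -> f x = true -> g x = true) ->
  In a l -> g a = true -> f a = false -> length (filter f l) < length (filter g l).
Proof. induction l as [|b l IH]; simpl; intros H Ha Hg Hf; [destruct Ha|].
  destruct Ha as [<-|Ha].
  - rewrite Hf, Hg. simpl. pose proof (filter_le f g l (fun x Hx => H x (or_intror Hx))). lia.
  - specialize (IH (fun x Hx => H x (or_intror Hx)) Ha Hg Hf).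
    destruct (f b) eqn:Ef; [rewrite (H b (or_introl eq_refl) Ef); simpl; lia|].
    destruct (g b); simpl; lia. Qed.

Definition notvis (w : list dir) (a : site) : bool :=
  if in_dec site_eq_dec a (visited origin w) then false else true.

Lemma cover_ind A : (forall a, In a A -> reach A a) -> forall k w,
  length (filter (notvis w) A) <= k ->
  exists w', length w' <= length w + 2 * length (filter (notvis w) A) /\
    forall a, In a A -> In a (visited origin w').
Proof.
  intros HA. induction k as [|k IH]; intros w Hk.
  - exists w. split; [lia|]. intros a Ha.
    destruct (in_dec site_eq_dec a (visited origin w)) as [h|h]; auto.
    exfalso. assert (In a (filter (notvis w) A)).
    { apply filter_In. split; auto. unfold notvis. destruct (in_dec _ _ _); tauto. }
    destruct (filter (notvis w) A); simpl in *; [auto|lia].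
  - destruct (filter (notvis w) A) as [|b rest] eqn:Ef.
    + exists w. split; [lia|]. intros a Ha.
      destruct (in_dec site_eq_dec a (visited origin w)) as [h|h]; auto.
      exfalso. assert (In a (filter (notvis w) A)).
      { apply filter_In. split; auto. unfold notvis. destruct (in_dec _ _ _); tauto. }
      rewrite Ef in H; auto.
    + assert (Hb : In b (filter (notvis w) A)) by (rewrite Ef; left; auto).
      apply filter_In in Hb. destruct Hb as [HbA Hbn].
      destruct (conn A (visited origin w) (visited_head _ _) b (HA b HbA)) as [Hv|[s [a [Hs [Ha [Hna Hsa]]]]]].
      { unfold notvis in Hbn. destruct (in_dec _ _ _); [discriminate|contradiction]. }
      destruct (adj_step s a Hsa) as [d ->].
      destruct (extend origin w s d Hs) as [w2 [Hl [Hsub Hin]]].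
      assert (Hlt : length (filter (notvis w2) A) < length (filter (notvis w) A)).
      { apply filter_lt with (step s d); auto.
        - intros x _. unfold notvis. destruct (in_dec site_eq_dec x (visited origin w2)); [discriminate|].
          destruct (in_dec site_eq_dec x (visited origin w)); auto.
        - unfold notvis. destruct (in_dec _ _ _); tauto.
        - unfold notvis. destruct (in_dec _ _ _); tauto. }
      rewrite Ef in Hlt. simpl in Hk.
      destruct (IH w2 ltac:(simpl in Hlt; lia)) as [w' [Hw' Hc]].
      exists w'. split; auto. simpl length in *. lia.
Qed.

Lemma cover n A : lattice_animal (S n) A -> exists w, length w = (2 * n)%nat /\
  forall a, In a A -> In a (visited origin w).
Proof.
  intros [HN [Hlen [HO HA]]].
  assert (Hm : length (filter (notvis []) A) <= n).
  { assert (length (filter (notvis []) A) < length (filter (fun _ => true) A)).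
    { apply filter_lt with origin; auto. }
    assert (length (filter (fun _ : site => true) A) = length A).
    { clear. induction A; simpl; auto. }
    lia. }
  destruct (cover_ind A HA n [] Hm) as [w [Hw Hc]].
  exists (w ++ repeat dE (2 * n - length w)). split.
  - rewrite length_app, repeat_length. simpl in Hw. lia.
  - intros a Ha. apply visited_app. left; auto.
Qed.

Open Scope R_scope.

Definition rsum {A} (f : A -> R) (l : list A) : R :=
  fold_right (fun x s => f x + s) 0 l.

Lemma rsum_app {A} (f : A -> R) l1 l2 : rsum f (l1 ++ l2) = rsum f l1 + rsum f l2.
Proof. induction l1; simpl; [ring| rewrite IHl1; ring]. Qed.

Lemma rsum_nonneg {A} (f : A -> R) l : (forall x, In x l -> 0 <= f x) -> 0 <= rsum f l.
Proof. induction l; simpl; intros H; [lra|].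
  pose proof (H a (or_introl eq_refl)). assert (0 <= rsum f l) by (apply IHl; auto). lra. Qed.

Lemma rsum_le {A} (f g : A -> R) l : (forall x, In x l -> f x <= g x) -> rsum f l <= rsum g l.
Proof. induction l; simpl; intros H; [lra|].
  pose proof (H a (or_introl eq_refl)). assert (rsum f l <= rsum g l) by (apply IHl; auto). lra. Qed.

Lemma rsum_ext {A} (f g : A -> R) l : (forall x, In x l -> f x = g x) -> rsum f l = rsum g l.
Proof. induction l; simpl; intros H; [lra|].
  rewrite (H a (or_introl eq_refl)), IHl; auto. Qed.

Lemma rsum_ge_term {A} (f : A -> R) l a : (forall x, In x l -> 0 <= f x) -> In a l -> f a <= rsum f l.
Proof. induction l; simpl; intros H Ha; [destruct Ha|].
  destruct Ha as [<-|Ha].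
  - assert (0 <= rsum f l) by (apply rsum_nonneg; auto). lra.
  - pose proof (H a0 (or_introl eq_refl)). assert (f a <= rsum f l) by (apply IHl; auto). lra. Qed.

Lemma rsum_mult_l {A} (f : A -> R) l c : c * rsum f l = rsum (fun x => c * f x) l.
Proof. induction l; simpl; [ring|rewrite <- IHl; ring]. Qed.

Lemma rsum_plus {A} (f g : A -> R) l : rsum (fun x => f x + g x) l = rsum f l + rsum g l.
Proof. induction l; simpl; [ring|rewrite IHl; ring]. Qed.

Lemma rsum_swap {A B} (g : A -> B -> R) l1 l2 :
  rsum (fun x => rsum (g x) l2) l1 = rsum (fun y => rsum (fun x => g x y) l1) l2.
Proof. induction l1; simpl.
  - induction l2; simpl; auto. rewrite <- IHl2; ring.
  - rewrite IHl1. rewrite <- rsum_plus. reflexivity. Qed.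

Lemma rsum_flat_map {A B} (f : B -> R) (g : A -> list B) l :
  rsum f (flat_map g l) = rsum (fun x => rsum f (g x)) l.
Proof. induction l; simpl; auto. rewrite rsum_app, IHl; auto. Qed.

Lemma rsum_map {A B} (f : B -> R) (g : A -> B) l : rsum f (map g l) = rsum (fun x => f (g x)) l.
Proof. induction l; simpl; auto. rewrite IHl; auto. Qed.

Lemma rsum_sub {A} (f : A -> R) L G : NoDup L -> incl L G -> (forall x, In x G -> 0 <= f x) ->
  rsum f L <= rsum f G.
Proof.
  revert G; induction L as [|a L IH]; intros G HN Hi Hp; simpl.
  - apply rsum_nonneg; auto.
  - assert (Ha : In a G) by (apply Hi; left; auto).
    destruct (in_split a G Ha) as [G1 [G2 ->]].
    inversion HN; subst.
    assert (rsum f L <= rsum f (G1 ++ G2)).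
    { apply IH; auto.
      - intros x Hx. assert (Hx' : In x (G1 ++ a :: G2)) by (apply Hi; right; auto).
        apply in_app_or in Hx'. apply in_or_app. destruct Hx' as [H|[H|H]]; auto.
        subst; contradiction.
      - intros x Hx; apply Hp. apply in_app_or in Hx; apply in_or_app; simpl; tauto. }
    rewrite rsum_app in *. simpl. lra.
Qed.

Lemma rsum_seq_sum (f : nat -> R) K : rsum f (seq 0 (S K)) = sum_f_R0 f K.
Proof. induction K.
  - simpl. ring.
  - rewrite seq_S, rsum_app, IHK. simpl. ring. Qed.

Lemma sum_f_R0_mono (f : nat -> R) K m : (forall i, 0 <= f i) -> sum_f_R0 f K <= sum_f_R0 f (m + K).
Proof. intros H; induction m; simpl; [lra|]. specialize (H (S (m + K))). lra. Qed.

Lemma exp_partial a K : 0 <= a -> sum_f_R0 (fun i => / INR (fact i) * a ^ i) K <= exp a.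
Proof.
  intros Ha. unfold exp. destruct (exist_exp a) as [l Hl]. simpl.
  unfold exp_in, infinite_sum in Hl.
  destruct (Rle_dec (sum_f_R0 (fun i => / INR (fact i) * a ^ i) K) l) as [h|h]; auto.
  exfalso. apply Rnot_le_lt in h.
  destruct (Hl (sum_f_R0 (fun i => / INR (fact i) * a ^ i) K - l)) as [N HN]; [lra|].
  specialize (HN (N + K)%nat ltac:(lia)).
  assert (sum_f_R0 (fun i => / INR (fact i) * a ^ i) K <= sum_f_R0 (fun i => / INR (fact i) * a ^ i) (N + K)).
  { apply sum_f_R0_mono. intros i. apply Rmult_le_pos.
    - left; apply Rinv_0_lt_compat, INR_fact_lt_0.
    - apply pow_le; auto. }
  unfold Rdist in HN. rewrite Rabs_right in HN; lra.
Qed.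

Lemma exp_INR_pow t n : exp (t * INR n) = exp t ^ n.
Proof. induction n.
  - simpl. rewrite Rmult_0_r, exp_0; auto.
  - rewrite S_INR, Rmult_plus_distr_l, Rmult_1_r, exp_plus, IHn. simpl. ring. Qed.

Lemma e_ge : 2.5 <= exp 1.
Proof.
  pose proof (exp_partial 1 3 ltac:(lra)). simpl in H.
  replace (/ 1 * 1 + / 1 * (1 * 1) + / (1 + 1) * (1 * (1 * 1)) + / ((1 + 1) * (1 + 1 + 1)) * (1 * (1 * (1 * 1)))) with (8/3) in H by field.
  lra.
Qed.

Fixpoint sdot (c : list bool) (v : list nat) : nat :=
  match c, v with
  | c0 :: c', x :: v' => ((if c0 then x else 0) + sdot c' v')%nat
  | _, _ => 0%nat
  end.
Fixpoint ctrue (c : list bool) : nat :=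
  match c with [] => 0%nat | b :: c' => ((if b then 1 else 0) + ctrue c')%nat end.
Fixpoint grid (K m : nat) : list (list nat) :=
  match m with
  | O => [[]]
  | S m' => flat_map (fun x => map (cons x) (grid K m')) (seq 0 (S K))
  end.

Lemma pmf_pos lam x : 0 < lam -> 0 <= poisson_pmf lam x.
Proof. intros. unfold poisson_pmf. apply Rmult_le_pos; [apply Rmult_le_pos|].
  - left; apply exp_pos.
  - apply pow_le; lra.
  - left; apply Rinv_0_lt_compat, INR_fact_lt_0. Qed.

Lemma cfg_prob_pos lam v : 0 < lam -> 0 <= cfg_prob lam v.
Proof. intros; induction v; simpl; [lra|]. apply Rmult_le_pos; auto. apply pmf_pos; auto. Qed.

Lemma hsum lam t K (b : bool) : 0 < lam ->
  rsum (fun x => poisson_pmf lam x * exp (t * INR (if b then x else 0%nat))) (seq 0 (S K))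
  <= exp (lam * (exp t - 1) * INR (if b then 1%nat else 0%nat)).
Proof.
  intros Hl.
  set (a := if b then lam * exp t else lam).
  assert (Ha : 0 <= a) by (unfold a; destruct b; [apply Rmult_le_pos; [lra| left; apply exp_pos]|lra]).
  rewrite (rsum_ext _ (fun x => exp (-lam) * (/ INR (fact x) * a ^ x))).
  2:{ intros x _. unfold poisson_pmf, a. destruct b.
      - rewrite exp_INR_pow, Rpow_mult_distr. unfold Rdiv. ring.
      - simpl. rewrite Rmult_0_r, exp_0. unfold Rdiv. ring. }
  rewrite <- rsum_mult_l, rsum_seq_sum.
  apply Rle_trans with (exp (-lam) * exp a).
  { apply Rmult_le_compat_l; [left; apply exp_pos|]. apply exp_partial; auto. }
  rewrite <- exp_plus. idtac.
  unfold a; destruct b; simpl; right; f_equal; ring.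
Qed.

Lemma grid_sum lam t K c : 0 < lam ->
  rsum (fun v => cfg_prob lam v * exp (t * INR (sdot c v))) (grid K (length c))
  <= exp (lam * (exp t - 1) * INR (ctrue c)).
Proof.
  intros Hl. induction c as [|b c IH].
  - simpl. rewrite Rmult_0_r, Rmult_0_r, exp_0. lra.
  - change (length (b :: c)) with (S (length c)). cbn [grid]. rewrite rsum_flat_map.
    rewrite (rsum_ext _ (fun x => (poisson_pmf lam x * exp (t * INR (if b then x else 0%nat))) *
        rsum (fun v => cfg_prob lam v * exp (t * INR (sdot c v))) (grid K (length c)))).
    2:{ intros x _. rewrite rsum_map, rsum_mult_l. apply rsum_ext. intros v _.
        simpl. rewrite plus_INR, Rmult_plus_distr_l, exp_plus. ring. }
    rewrite (rsum_ext _ (fun x => rsum (fun v => cfg_prob lam v * exp (t * INR (sdot c v))) (grid K (length c)) *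
        (poisson_pmf lam x * exp (t * INR (if b then x else 0%nat))))).
    2:{ intros; ring. }
    rewrite <- rsum_mult_l.
    simpl ctrue. rewrite plus_INR, Rmult_plus_distr_l, exp_plus, Rmult_comm.
    apply Rmult_le_compat.
    + apply rsum_nonneg. intros; apply Rmult_le_pos; [apply pmf_pos; auto|left; apply exp_pos].
    + apply rsum_nonneg. intros; apply Rmult_le_pos; [apply cfg_prob_pos; auto|left; apply exp_pos].
    + apply hsum; auto.
    + exact IH.
Qed.

Lemma in_grid K v : (forall x, In x v -> (x <= K)%nat) -> In v (grid K (length v)).
Proof.
  induction v as [|x v IH]; intros H; [simpl; auto|]. change (length (x :: v)) with (S (length v)). cbn [grid].
  apply in_flat_map. exists x. split.
  - apply in_seq. specialize (H x (or_introl eq_refl)). lia.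
  - apply in_map. apply IH. intros; apply H; simpl; auto.
Qed.

Fixpoint nsum (l : list nat) : nat := match l with [] => 0%nat | x :: l' => (x + nsum l')%nat end.

Lemma nsum_in x l : In x l -> (x <= nsum l)%nat.
Proof. induction l; simpl; intros H; [destruct H|]. destruct H; subst; [lia|]. specialize (IHl H); lia. Qed.

Lemma G_bound lam t c (L : list (list nat)) : 0 < lam -> NoDup L ->
  (forall v, In v L -> length v = length c) ->
  rsum (fun v => cfg_prob lam v * exp (t * INR (sdot c v))) L
  <= exp (lam * (exp t - 1) * INR (ctrue c)).
Proof.
  intros Hl HN HL.
  set (K := nsum (map nsum L)).
  eapply Rle_trans; [|apply (grid_sum lam t K c Hl)].
  apply rsum_sub; auto.
  - intros v Hv. rewrite <- (HL v Hv). apply in_grid. intros x Hx.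
    apply Nat.le_trans with (nsum v); [apply nsum_in; auto|].
    apply nsum_in. apply in_map; auto.
  - intros; apply Rmult_le_pos; [apply cfg_prob_pos; auto|left; apply exp_pos].
Qed.

Fixpoint nsumf (f : site -> nat) (A : list site) : nat :=
  match A with [] => 0%nat | k :: A' => (f k + nsumf f A')%nat end.

Lemma nsumf_app f A1 A2 : nsumf f (A1 ++ A2) = (nsumf f A1 + nsumf f A2)%nat.
Proof. induction A1; simpl; lia. Qed.

Lemma nsumf_ext f g A : (forall k, In k A -> f k = g k) -> nsumf f A = nsumf g A.
Proof. induction A; simpl; intros H; auto. Qed.

Lemma lookup_sum (P : site -> bool) s v A : NoDup A -> (forall k, In k A -> P k = true) ->
  (nsumf (lookup s v) A <= sdot (map P s) v)%nat.
Proof.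
  revert v A; induction s as [|a s IH]; intros v A HN HP.
  - simpl. clear. induction A; simpl; lia.
  - destruct v as [|x v].
    + simpl. clear. induction A; simpl; lia.
    + simpl.
      destruct (in_dec site_eq_dec a A) as [Ha|Ha].
      * destruct (in_split a A Ha) as [A1 [A2 ->]].
        rewrite (HP a (in_or_app _ _ _ (or_intror (or_introl eq_refl : In a (a :: A2))))). 
        pose proof (NoDup_remove_2 _ _ _ HN) as Hn.
        pose proof (NoDup_remove_1 _ _ _ HN) as HN'.
        rewrite nsumf_app. simpl.
        destruct (site_eq_dec a a) as [_|]; [|congruence].
        rewrite (nsumf_ext _ (lookup s v) A1), (nsumf_ext _ (lookup s v) A2).
        -- specialize (IH v (A1 ++ A2) HN').
           rewrite nsumf_app in IH.
           assert (nsumf (lookup s v) A1 + nsumf (lookup s v) A2 <= sdot (map P s) v)%nat.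
           { apply IH. intros k Hk; apply HP. apply in_app_or in Hk; apply in_or_app; simpl; tauto. }
           lia.
        -- intros k Hk. destruct (site_eq_dec a k); auto. subst. exfalso; apply Hn; apply in_or_app; auto.
        -- intros k Hk. destruct (site_eq_dec a k); auto. subst. exfalso; apply Hn; apply in_or_app; auto.
      * rewrite (nsumf_ext _ (lookup s v) A).
        -- specialize (IH v A HN HP). destruct (P a); lia.
        -- intros k Hk. destruct (site_eq_dec a k); auto. subst; contradiction.
Qed.

Lemma weight_cfg n v A : weight (cfg n v) A = INR (nsumf (lookup (box n) v) A).
Proof. induction A; simpl; auto. rewrite plus_INR, IHA. reflexivity. Qed.

Lemma ctrue_map (P : site -> bool) s : ctrue (map P s) = length (filter P s).
Proof. induction s; simpl; auto. destruct (P a); simpl; lia. Qed.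

Lemma NoDup_flat_map' {A B} (g : A -> list B) l : NoDup l -> (forall i, NoDup (g i)) ->
  (forall i j x, In x (g i) -> In x (g j) -> i = j) -> NoDup (flat_map g l).
Proof.
  induction l as [|a l IH]; simpl; intros HN Hg Hd; [constructor|].
  inversion HN; subst. apply NoDup_app; auto.
  intros x Hx Hx'. apply in_flat_map in Hx'. destruct Hx' as [j [Hj Hxj]].
  rewrite (Hd a j x Hx Hxj) in H1. contradiction.
Qed.

Lemma NoDup_box n : NoDup (box n).
Proof.
  unfold box.
  assert (Hz : NoDup (zrange n)).
  { unfold zrange. apply NoDup_map_NoDup_ForallPairs; [|apply seq_NoDup].
    intros a b _ _ H. lia. }
  apply NoDup_flat_map'; auto.
  - intros i. apply NoDup_map_NoDup_ForallPairs; auto. intros a b _ _ H. congruence.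
  - intros i j x H1 H2. apply in_map_iff in H1, H2.
    destruct H1 as [a [<- _]], H2 as [b [E _]]. congruence.
Qed.

Fixpoint codes (N : nat) : list (list dir) :=
  match N with
  | O => [[]]
  | S N' => flat_map (fun w => map (fun d => d :: w) [dE; dW; dN; dS]) (codes N')
  end.

Lemma in_codes w : In w (codes (length w)).
Proof.
  induction w as [|d w IH]; simpl; auto.
  apply in_flat_map. exists w. split; auto. destruct d; simpl; auto.
Qed.

Lemma rsum_codes_const N c : rsum (fun _ => c) (codes N) = 4 ^ N * c.
Proof.
  induction N; [simpl; ring|].
  cbn [codes]. rewrite rsum_flat_map.
  transitivity (rsum (fun _ => 4 * c) (codes N)).
  { apply rsum_ext; intros; simpl; ring. }
  rewrite <- rsum_mult_l, IHN. simpl; ring.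
Qed.

Lemma codes_length N w : In w (codes N) -> length w = N.
Proof.
  revert w; induction N; simpl; intros w H.
  - destruct H as [<-|[]]; auto.
  - apply in_flat_map in H. destruct H as [w' [Hw' H]].
    simpl in H. destruct H as [<-|[<-|[<-|[<-|[]]]]]; simpl; f_equal; auto.
Qed.

Lemma exp_le_exp x y : x <= y -> exp x <= exp y.
Proof. intros [h|h]; [left; apply exp_increasing; auto|right; subst; auto]. Qed.

Lemma length_visited p w : length (visited p w) = S (length w).
Proof. revert p; induction w; simpl; intros; auto. Qed.

Definition cw n (w : list dir) : list bool :=
  map (fun k => if in_dec site_eq_dec k (visited origin w) then true else false) (box n).

Lemma ctrue_cw n w : (ctrue (cw n w) <= S (length w))%nat.
Proof.
  unfold cw. rewrite ctrue_map. rewrite <- (length_visited origin w).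
  apply NoDup_incl_length.
  - apply NoDup_filter, NoDup_box.
  - intros k Hk. apply filter_In in Hk. destruct Hk as [_ Hk].
    destruct (in_dec _ _ _); [auto|discriminate].
Qed.

Lemma final_ineq (y lam : R) (n' : nat) : 0 < lam -> exp 3 * lam <= y -> 75 <= y ->
  4 ^ (2 * n') * (exp (- (2 * (y * INR (S n')))) * exp (lam * (exp 2 - 1) * INR (S (2 * n'))))
  <= exp (- (y * INR (S n'))).
Proof.
  intros Hl H3 H75.
  set (m := INR (S n')).
  assert (Hm : 1 <= m) by (unfold m; rewrite S_INR; pose proof (pos_INR n'); lra).
  assert (H2m : INR (S (2 * n')) <= 2 * m).
  { unfold m. rewrite !S_INR, mult_INR. simpl. lra. }
  assert (He : 2.5 <= exp 1) by apply e_ge.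
  assert (E3 : exp 3 = exp 2 * exp 1) by (rewrite <- exp_plus; f_equal; lra).
  assert (Hk : lam * (exp 2 - 1) <= 0.4 * y).
  { pose proof (exp_pos 2). rewrite E3 in H3. nra. }
  assert (Hk0 : 0 <= lam * (exp 2 - 1)).
  { apply Rmult_le_pos; [lra|]. pose proof (exp_ineq1 2 ltac:(lra)). lra. }
  assert (Hexp1 : exp (lam * (exp 2 - 1) * INR (S (2 * n'))) <= exp (0.8 * y * m)).
  { apply exp_le_exp. apply Rle_trans with (0.4 * y * INR (S (2 * n'))).
    - apply Rmult_le_compat_r; [apply pos_INR|lra].
    - nra. }
  assert (Hpow : 4 ^ (2 * n') <= exp (0.2 * y * m)).
  { rewrite pow_mult. unfold m. rewrite exp_INR_pow.
    apply Rle_trans with (16 ^ (S n')).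
    - replace (4 ^ 2) with 16 by ring. simpl. pose proof (pow_le 16 n' ltac:(lra)). nra.
    - apply pow_incr. pose proof (exp_ineq1 (0.2 * y) ltac:(lra)). lra. }
  apply Rle_trans with (exp (0.2 * y * m) * (exp (- (2 * (y * m))) * exp (0.8 * y * m))).
  { apply Rmult_le_compat; [apply pow_le; lra| |auto|].
    - apply Rmult_le_pos; left; apply exp_pos.
    - apply Rmult_le_compat_l; [left; apply exp_pos|auto]. }
  rewrite <- !exp_plus. right. f_equal. lra.
Qed.

Theorem lemma3p1 :
  exists rho : R, 0 < rho /\
    forall (lam : R), 0 < lam ->
    forall (y : R), Rmax (exp 3 * lam) rho <= y ->
    forall (n : nat) (L : list (list nat)),
      NoDup L ->
      (forall v, In v L ->
         length v = length (box n) /\ Nn_gt (cfg n v) n (y * INR n)) ->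
      sum_prob lam L <= exp (- (y * INR n)).
Proof.
  exists 75. split; [lra|].
  intros lam Hl y Hy n L HN HL.
  assert (H3 : exp 3 * lam <= y) by (eapply Rle_trans; [apply Rmax_l|exact Hy]).
  assert (H75 : 75 <= y) by (eapply Rle_trans; [apply Rmax_r|exact Hy]).
  destruct n as [|n'].
  - destruct L as [|v L].
    + simpl. left; apply exp_pos.
    + exfalso. destruct (HL v (or_introl eq_refl)) as [_ [A [[_ [Hlen [HO _]]] _]]].
      destruct A; [destruct HO|discriminate].
  - set (N := (2 * n')%nat).
    set (g := fun (v : list nat) (w : list dir) =>
                exp (2 * (INR (sdot (cw (S n') w) v) - y * INR (S n')))).
    assert (Hone : forall v, In v L -> 1 <= rsum (g v) (codes N)).
    { intros v Hv. destruct (HL v Hv) as [_ [A [Hanim Hw]]].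
      destruct (cover n' A Hanim) as [w [Hlw Hc]].
      apply Rle_trans with (g v w).
      - unfold g. rewrite <- exp_0. apply exp_le_exp.
        assert (weight (cfg (S n') v) A <= INR (sdot (cw (S n') w) v)).
        { rewrite weight_cfg. apply le_INR. unfold cw.
          apply lookup_sum.
          - destruct Hanim; tauto.
          - intros k Hk. destruct (in_dec _ _ _) as [|h]; [reflexivity|exfalso; apply h; apply Hc; auto]. }
        lra.
      - apply rsum_ge_term.
        + intros; unfold g; left; apply exp_pos.
        + unfold N; rewrite <- Hlw. apply in_codes. }
    change (sum_prob lam L) with (rsum (cfg_prob lam) L).
    apply Rle_trans with (rsum (fun v => cfg_prob lam v * rsum (g v) (codes N)) L).
    { apply rsum_le. intros v Hv. specialize (Hone v Hv).
      pose proof (cfg_prob_pos lam v Hl). nra. }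
    rewrite (rsum_ext _ (fun v => rsum (fun w => cfg_prob lam v * g v w) (codes N)) L)
      by (intros; apply rsum_mult_l).
    rewrite rsum_swap.
    set (kap := lam * (exp 2 - 1)).
    apply Rle_trans with (rsum (fun _ => exp (- (2 * (y * INR (S n')))) * exp (kap * INR (S N))) (codes N)).
    { apply rsum_le. intros w Hw.
      rewrite (rsum_ext _ (fun v => exp (- (2 * (y * INR (S n')))) *
                 (cfg_prob lam v * exp (2 * INR (sdot (cw (S n') w) v))))).
      2:{ intros v _. unfold g.
          replace (2 * (INR (sdot (cw (S n') w) v) - y * INR (S n')))
            with (- (2 * (y * INR (S n'))) + 2 * INR (sdot (cw (S n') w) v)) by ring.
          rewrite exp_plus. ring. }
      rewrite <- rsum_mult_l.
      apply Rmult_le_compat_l; [left; apply exp_pos|].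
      eapply Rle_trans.
      - apply G_bound; auto. intros v Hv. unfold cw. rewrite length_map. apply HL; auto.
      - apply exp_le_exp. apply Rmult_le_compat_l.
        + apply Rmult_le_pos; [lra|]. pose proof (exp_ineq1 2 ltac:(lra)). lra.
        + apply le_INR. pose proof (ctrue_cw (S n') w). rewrite (codes_length N w Hw) in H. exact H. }
    rewrite rsum_codes_const. unfold N, kap. apply final_ineq; auto.
Qed.
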